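(* Let $f\in\mathcal{F}(\mathbb{L})$ and let $g:\mathbb{R}_{\ge0}\to\mathbb{R}$ satisfy: (1) $g$ is $1$-periodic; (2) $g(0)\neq0$; (3) the even extension of $g$ to $\mathbb{R}$ has a $1$-periodic Fourier series $S_N(\xi)=\sum_{k=0}^N a_k\cos(2\pi k\xi)$ with all coefficients $a_k\ge0$; (4) $S_N(\xi)\to g(\xi)$ as $N\to\infty$ for every $\xi$. Then $|g|\,f\in\mathcal{F}(\mathbb{L})$.
   Context: $\mathbb{L}=\{x\in\mathbb{R}\setminus\mathbb{Q}:\ \forall n\in\mathbb{N}\ \exists q\in\mathbb{N}\text{ with }\|qx\|<q^{-n}\}$ is the set of Liouville numbers, where $\|x\|=\min_{m\in\mathbb{Z}}|x-m|$. For a finite Borel measure $\mu$ on $\mathbb{R}$, $\hat\mu(\xi)=\int e^{-2\pi i x\xi}\,d\mu(x)$. For a Borel set $E\subset\mathbb{R}$, $\mathcal{P}(E)$ denotes the Borel probability measures $\mu$ on $\mathbb{R}$ with $\mu(\mathbb{R}\setminus E)=0$. For a function $f$ with values in $\mathbb{R}_{\ge0}$ defined at least on $[M_0,\infty)$ for some $M_0$, we write $f\in\mathcal{F}(E)$ if there exist $\mu\in\mathcal{P}(E)$ and constants $c,M>0$ such that $|\hat\mu(\xi)|\le c\,f(|\xi|)$ for all $\xi\in\mathbb{R}$ with $|\xi|\ge M$. *)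

(* Defs.v *)
From HB Require Import structures.
From mathcomp Require Import all_boot all_order all_algebra.
From mathcomp Require Import all_classical all_reals all_analysis.
Set Implicit Arguments. Unset Strict Implicit. Unset Printing Implicit Defensive.
Import Order.TTheory GRing.Theory Num.Theory.
Local Open Scope classical_set_scope.
Local Open Scope ring_scope.

Definition dist_Z (R : realType) (x : R) : R :=
  inf [set `|x - m%:~R| | m in [set: int]].

Definition Liouville (R : realType) : set R :=
  [set x : R | (~ exists r : rat, x = ratr r) /\
     forall n : nat, exists q : nat, (0 < q)%N /\
       dist_Z (q%:R * x) < (q%:R ^+ n)^-1].

(* Fourier transform \hat mu(xi) = \int e^{-2 pi i x xi} d mu(x), given by its
   real and imaginary parts; fourier_abs mu xi = |\hat mu(xi)|. *)
Definition fourier_re (R : realType) (mu : probability R R) (xi : R) : R :=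
  Rintegral mu setT (fun x => cos (2 * pi * x * xi)).
Definition fourier_im (R : realType) (mu : probability R R) (xi : R) : R :=
  - Rintegral mu setT (fun x => sin (2 * pi * x * xi)).
Definition fourier_abs (R : realType) (mu : probability R R) (xi : R) : R :=
  Num.sqrt (fourier_re mu xi ^+ 2 + fourier_im mu xi ^+ 2).

Definition supported_on (R : realType) (mu : probability R R) (E : set R) : Prop :=
  mu (~` E) = 0%E.

Definition in_F (R : realType) (E : set R) (f : R -> R) : Prop :=
  exists (mu : probability R R) (c M : R),
    supported_on mu E /\ 0 < c /\ 0 < M /\
    forall xi : R, M <= `|xi| -> fourier_abs mu xi <= c * f `|xi|.

(* Fourier cosine coefficients of the even extension G(x) = g(|x|) of g,
   computed over the period [-1/2, 1/2]:
   a_0 = \int G, a_k = 2 \int G(x) cos(2 pi k x) dx (k >= 1). *)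
Definition even_ext (R : realType) (g : R -> R) : R -> R := fun x => g `|x|.

Definition cos_coef (R : realType) (g : R -> R) (k : nat) : R :=
  (if k == 0%N then 1 else 2) *
  Rintegral (@lebesgue_measure R) `[(- 2^-1), 2^-1]
     (fun x => even_ext g x * cos (2 * pi * k%:R * x)).

Definition cos_partial_sum (R : realType) (g : R -> R) (N : nat) (xi : R) : R :=
  \sum_(0 <= k < N.+1) cos_coef g k * cos (2 * pi * k%:R * xi).

(* Main.v *)
Require Import Defs.
From HB Require Import structures.
From mathcomp Require Import all_boot all_order all_algebra.
From mathcomp Require Import all_classical all_reals all_analysis.
Import Order.TTheory GRing.Theory Num.Theory.
Import numFieldNormedType.Exports.
Local Open Scope classical_set_scope.
Local Open Scope ring_scope.
From mathcomp Require Import ring lra.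
From mathcomp Require Import measurable_realfun.
Lemma dist_Z_shift (R : realType) (y : R) (n : int) :
  dist_Z (y + n%:~R) = dist_Z y.
Proof.
rewrite /dist_Z; congr inf; apply/seteqP; split => _ [m _ <-].
- exists (m - n) => //; rewrite intrB; congr (`|_|); lra.
- exists (m + n) => //; rewrite intrD; congr (`|_|); lra.
Qed.

Lemma Liouville_shift (R : realType) (x : R) (n : int) :
  Liouville x -> Liouville (x + n%:~R).
Proof.
move=> [hirr hq]; split.
  move=> [r hr]; apply: hirr; exists (r - n%:~R).
  by rewrite rmorphB /= rmorph_int -hr addrK.
move=> k; have [q [q0 hqk]] := hq k; exists q; split => //.
have -> : q%:R * (x + n%:~R) = q%:R * x + (q%:Z * n)%:~R :> R.
  by rewrite intrM mulrDr.
by rewrite dist_Z_shift.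
Qed.

Lemma Liouville_preimage (R : realType) (c : int) :
  (fun x : R => x + c%:~R) @^-1` (~` (@Liouville R)) = ~` (@Liouville R).
Proof.
apply/seteqP; split => x /= hx hL; apply: hx.
- exact: Liouville_shift.
- have := @Liouville_shift R _ (- c) hL; by rewrite intrN addrK.
Qed.
Definition shiftc {R : realType} (c : R) : R -> R := fun x => x + c.

Lemma measurable_shiftc {R : realType} (c : R) : measurable_fun setT (shiftc c).
Proof. rewrite /shiftc; apply: measurable_funD => //. Qed.

HB.instance Definition _ (R : realType) (c : R) :=
  isMeasurableFun.Build _ _ _ _ (shiftc c) (@measurable_shiftc R c).

Lemma eseries_EFin {R : realType} (u : nat -> R) (l : R) :
  (fun N => \sum_(0 <= k < N) u k) @ \oo --> l ->
  (\sum_(k <oo) (u k)%:E = l%:E)%E.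
Proof.
move=> hu.
rewrite (_ : (fun N => \sum_(0 <= k < N) (u k)%:E)%E = EFin \o (fun N => \sum_(0 <= k < N) u k)); last first.
  by apply/funext => N /=; rewrite sumEFin.
rewrite EFin_lim; last by apply/cvg_ex; exists l.
by rewrite (cvg_lim _ hu).
Qed.


Lemma bnd_integrable {R : realType} (P : probability R R) (h : R -> R) :
  measurable_fun setT h -> (forall x, `|h x| <= 1) -> P.-integrable setT (EFin \o h).
Proof.
move=> mh h1; apply: measurable_bounded_integrable => //.
  by apply: (le_lt_trans (probability_le1 _ _)) => //; exact: ltry.
exists 1; split => // M M1 x _; exact: (le_trans (h1 x) (ltW M1)).
Qed.

Lemma int_EFin {R : realType} (P : probability R R) (h : R -> R) :
  measurable_fun setT h -> (forall x, `|h x| <= 1) ->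
  (\int[P]_x (h x)%:E = (Rintegral P setT h)%:E)%E.
Proof.
move=> mh h1; rewrite /Rintegral fineK//; apply: integrable_fin_num => //; exact: bnd_integrable.
Qed.

Lemma int_plus1 {R : realType} (P : probability R R) (h : R -> R) :
  measurable_fun setT h -> (forall x, `|h x| <= 1) ->
  (\int[P]_x (h x + 1)%:E = (Rintegral P setT h + 1)%:E)%E.
Proof.
move=> mh h1; rewrite integralD_EFin//; last 2 first.
- exact: bnd_integrable.
- apply: (@bnd_integrable R P (fun=> 1)) => // x; by rewrite normr1.
rewrite int_EFin// integral_cst// [X in (_ * X)%E](_ : _ = 1%E) ?mule1 ?EFinD//; exact: probability_setT.
Qed.

Section Mix.
Context (R : realType) (mu : probability R R) (b : nat -> R).
Hypothesis hb : (fun N => \sum_(0 <= k < N) (2 * `|b k|)) @ \oo --> (1:R).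

Definition mk (k : nat) : {measure set R -> \bar R} :=
  mscale (`|b k|)%:nng (measure_add (distribution mu (shiftc k%:R))
                                      (distribution mu (shiftc (- k%:R)))).

Definition nu : set R -> \bar R := let _ := hb in mseries mk 0.
HB.instance Definition _ := Measure.copy nu (mseries mk 0).

Lemma nu_ge0int (F : R -> \bar R) : measurable_fun setT F -> (forall x, 0 <= F x)%E ->
  (\int[nu]_x F x = \sum_(k <oo) ((`|b k|)%:E *
      (\int[mu]_x F (x + k%:R)%R + \int[mu]_x F (x - k%:R)%R)))%E.
Proof.
move=> mF F0.
rewrite ge0_integral_measure_series//; apply: eq_eseriesr => k _.
rewrite ge0_integral_mscale//= ge0_integral_measure_add//.
by rewrite !ge0_integral_distribution.
Qed.


Lemma nu_setT : nu setT = 1%E.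
Proof.
have := @nu_ge0int (fun=> 1%E) (measurable_cst _) (fun _ => lee01).
rewrite integral_cst// mul1e => H; rewrite /nu H.
under eq_eseriesr => k _ do rewrite integral_cst//= probability_setT mul1e -EFinD -EFinM.
apply: eseries_EFin.
rewrite (_ : (fun N => \sum_(0 <= k < N) `|b k| * (1 + 1)) =
  (fun N => \sum_(0 <= k < N) 2 * `|b k|)) //.
by apply/funext => N; apply: eq_bigr => k _; rewrite mulrC.
Qed.

HB.instance Definition _ := Measure_isProbability.Build _ _ _ nu nu_setT.

Lemma nu_Rint (h : R -> R) (mh : measurable_fun setT h) (h1 : forall x, `|h x| <= 1) (L : R)
  (hL : (fun N => \sum_(0 <= k < N) (`|b k| * (Rintegral mu setT (fun x => h (x + k%:R)) +
            Rintegral mu setT (fun x => h (x - k%:R))))) @ \oo --> L) :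
  Rintegral nu setT h = L.
Proof.
have mhs : forall c : R, measurable_fun setT (fun x : R => h (x + c)).
  by move=> c; exact: (measurableT_comp mh (measurable_shiftc c)).
have mF : measurable_fun setT (fun x : R => (h x + 1)%:E).
  by apply/measurable_EFinP; apply: measurable_funD.
have F0 : forall x, (0 <= (h x + 1)%:E)%E.
  by move=> x; rewrite lee_fin; have := h1 x; rewrite ler_norml => /andP[? ?]; lra.
have e1 := @nu_ge0int _ mF F0.
have e2 : (Rintegral nu setT h + 1)%:E = (L + 1)%:E.
  rewrite -int_plus1// e1.
  under eq_eseriesr => k _ do rewrite (int_plus1 mu (fun x : R => h (x + k%:R)))//
   (int_plus1 mu (fun x : R => h (x - k%:R)))// -EFinD -EFinM.
  apply: eseries_EFin.
  rewrite (_ : (fun N => _) = (fun N =>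
     \sum_(0 <= k < N) (`|b k| * (Rintegral mu setT (fun x => h (x + k%:R)) +
            Rintegral mu setT (fun x => h (x - k%:R)))) + \sum_(0 <= k < N) (2 * `|b k|))).
    exact: cvgD hL hb.
  by apply/funext => N; rewrite -big_split /=; apply: eq_bigr => k _; lra.
by move: e2 => /eqP; rewrite eqe => /eqP; lra.
Qed.

Lemma pre_nat (k : nat) :
  shiftc (k%:R : R) @^-1` (~` (@Liouville R)) = ~` (@Liouville R).
Proof. by have := Liouville_preimage R (k%:Z); rewrite pmulrn. Qed.

Lemma pre_natN (k : nat) :
  shiftc (- k%:R : R) @^-1` (~` (@Liouville R)) = ~` (@Liouville R).
Proof. by have := Liouville_preimage R (- k%:Z); rewrite intrN pmulrn. Qed.

Lemma nu_supp (h0 : mu (~` (@Liouville R)) = 0%E) : nu (~` (@Liouville R)) = 0%E.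
Proof.
rewrite /nu /mseries /=; apply: eseries0 => k _ _.
rewrite /mk /= {1}/mscale /= /msum !big_ord_recl big_ord0 /= /distribution /pushforward.
rewrite pre_nat pre_natN h0.
by rewrite !adde0 mule0.
Qed.

End Mix.

Lemma pair_int {R : realType} (P : probability R R) (T : R -> R)
  (mT : measurable_fun setT T) (T1 : forall x, `|T x| <= 1)
  (TD : forall A B, T (A + B) + T (A - B) = 2 * cos B * T A) (xi v : R) :
  Rintegral P setT (fun x => T (2 * pi * (x + v) * xi)) +
  Rintegral P setT (fun x => T (2 * pi * (x - v) * xi)) =
  2 * cos (2 * pi * v * xi) * Rintegral P setT (fun x => T (2 * pi * x * xi)).
Proof.
have ml : forall c : R, measurable_fun setT (fun x : R => T (2 * pi * (x + c) * xi)).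
  move=> c; apply: measurableT_comp => //.
  apply: measurable_funM => //; apply: measurable_funM => //.
  exact: measurable_shiftc.
have m0 : measurable_fun setT (fun x : R => T (2 * pi * x * xi)).
  apply: measurableT_comp => //.
  by apply: measurable_funM => //; apply: measurable_funM.
rewrite -RintegralD//; last 2 first.
- exact: bnd_integrable.
- exact: bnd_integrable.
rewrite -RintegralZl//; last exact: bnd_integrable.
apply: eq_Rintegral => x _; rewrite -TD; congr (T _ + T _); ring.
Qed.

Lemma cos_pm {R : realType} (A B : R) : cos (A + B) + cos (A - B) = 2 * cos B * cos A.
Proof. rewrite cosD cosB; ring. Qed.

Lemma sin_pm {R : realType} (A B : R) : sin (A + B) + sin (A - B) = 2 * cos B * sin A.
Proof. rewrite sinD sinB; ring. Qed.

Lemma mcos {R : realType} : measurable_fun setT (@cos R).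
Proof. exact: continuous_measurable_fun (@continuous_cos R). Qed.

Lemma msin {R : realType} : measurable_fun setT (@sin R).
Proof. exact: continuous_measurable_fun (@continuous_sin R). Qed.



Lemma cos_abs {R : realType} (k : nat) (xi : R) :
  cos (2 * pi * k%:R * `|xi|) = cos (2 * pi * k%:R * xi).
Proof.
by case: (lerP 0 xi) => [/ger0_norm|/ltW/ler0_norm] ->; rewrite ?mulrN ?cosN.
Qed.

Theorem theorem1p6 (R : realType) (f g : R -> R) (M0 : R)
  (f_nonneg : forall x : R, M0 <= x -> 0 <= f x)
  (hf : in_F (@Liouville R) f)
  (g_per : forall x : R, 0 <= x -> g (x + 1) = g x)
  (g0 : g 0 != 0)
  (G_int : (@lebesgue_measure R).-integrable `[(- 2^-1), 2^-1] (fun x => (even_ext g x)%:E))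
  (coef_nonneg : forall k : nat, 0 <= cos_coef g k)
  (S_cvg : forall xi : R, 0 <= xi -> (fun N : nat => cos_partial_sum g N xi) @ \oo --> g xi) :
  in_F (@Liouville R) (fun x => `|g x| * f x).
Proof.
have [mu [c [M [supp [c0 [M0' hbound]]]]]] := hf.
set a := cos_coef g.
have Sgen : forall y, 0 <= y ->
    (fun N => \sum_(0 <= k < N) a k * cos (2 * pi * k%:R * y)) @ \oo --> g y.
  move=> y y0; rewrite -cvg_shiftS; exact: S_cvg.
have Sa : (fun N => \sum_(0 <= k < N) a k) @ \oo --> g 0.
  have := Sgen 0 (lexx 0).
  by under eq_fun => N do under eq_bigr => k _ do rewrite mulr0 cos0 mulr1.
have g0pos : 0 < g 0.
  rewrite lt_neqAle eq_sym g0 /= -(cvg_lim _ Sa) //.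
  apply: limr_ge; first by apply/cvg_ex; exists (g 0).
  by near=> N; apply: sumr_ge0 => k _; exact: coef_nonneg.
have g0n : g 0 != 0 := g0.
set b := fun k => a k / (2 * g 0).
have babs : forall k, `|b k| = a k / (2 * g 0).
  by move=> k; rewrite ger0_norm // divr_ge0 // ?mulr_ge0 // ltW.
have hb : (fun N => \sum_(0 <= k < N) (2 * `|b k|)) @ \oo --> (1 : R).
  rewrite (_ : (fun N => _) = (fun N => (\sum_(0 <= k < N) a k) * (g 0)^-1)); last first.
    apply/funext => N; rewrite big_distrl /=; apply: eq_bigr => k _.
    rewrite babs; field; by rewrite g0n.
  rewrite -(divff g0n); apply: cvgM => //; exact: cvg_cst.
set nu' := nu R mu b hb.
exists nu', (c / g 0), M; split; [|split; [|split]].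
- exact: nu_supp.
- by rewrite divr_gt0.
- by [].
move=> xi Mxi.
set G := g `|xi| / g 0.
have Sxi := Sgen `|xi| (normr_ge0 xi).
have key : forall (T : R -> R), measurable_fun setT T -> (forall x, `|T x| <= 1) ->
    (forall A B, T (A + B) + T (A - B) = 2 * cos B * T A) ->
    Rintegral nu' setT (fun x => T (2 * pi * x * xi)) =
    Rintegral mu setT (fun x => T (2 * pi * x * xi)) * G.
  move=> T mT T1 TD; apply: nu_Rint.
  - apply: measurableT_comp => //.
    by apply: measurable_funM => //; apply: measurable_funM.
  - by move=> x.
  rewrite (_ : (fun N => _) = (fun N =>
     (\sum_(0 <= k < N) a k * cos (2 * pi * k%:R * `|xi|)) *
       (Rintegral mu setT (fun x => T (2 * pi * x * xi)) / g 0))); last first.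
    apply/funext => N; rewrite big_distrl /=; apply: eq_bigr => k _.
    rewrite (pair_int mu T mT T1 TD xi k%:R) babs cos_abs; field; by rewrite g0n.
  rewrite /G (_ : Rintegral mu setT (fun x => T (2 * pi * x * xi)) * (g `|xi| / g 0) =
     g `|xi| * (Rintegral mu setT (fun x => T (2 * pi * x * xi)) / g 0)); last first.
    by rewrite mulrCA mulrA.
  apply: cvgM => //; exact: cvg_cst.
have hre : fourier_re nu' xi = fourier_re mu xi * G.
  rewrite /fourier_re; apply: key; [exact: mcos | exact: cos_max | exact: cos_pm].
have him : fourier_im nu' xi = fourier_im mu xi * G.
  rewrite /fourier_im key ?mulNr //; [exact: msin | exact: sin_max | exact: sin_pm].
have habs : fourier_abs nu' xi = `|G| * fourier_abs mu xi.
  rewrite /fourier_abs hre him.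
  rewrite (_ : _ + _ = G ^+ 2 * (fourier_re mu xi ^+ 2 + fourier_im mu xi ^+ 2)); last by ring.
  by rewrite sqrtrM ?sqr_ge0 // sqrtr_sqr.
rewrite habs /G normrM [`|(g 0)^-1|]ger0_norm; last by rewrite invr_ge0 ltW.
have e : c / g 0 * (`|g `|xi| | * f `|xi|) = `|g `|xi| | / g 0 * (c * f `|xi|) by ring.
rewrite e; apply: ler_wpM2l; last exact: hbound.
by rewrite mulr_ge0 // invr_ge0 ltW.
Unshelve. all: by end_near.
Qed.
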